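(* Let $m\ge2$, $G=CK(2m-1)$, and let $B$ be a set of edges of Class A with parameters $\alpha,\delta$ (so that $B$ contains all edges of the boundary path $\langle\alpha,\alpha+1,\dots,m-\delta\rangle$). Let $F$ be a simple Hamiltonian path of $G$. If some edge of $F$ connects two vertices of the path $\langle\alpha,\alpha+1,\dots,m-\delta\rangle$, then $F$ and $B$ have an edge in common.
   Context: $CK(2m-1)$ is the complete convex geometric graph on $2m-1$ points in convex position, labelled clockwise $0,\dots,2m-2$ (elements of $\mathbb{Z}_{2m-1}$; indices mod $2m-1$), with all segments as edges. A simple Hamiltonian path is a path through all vertices whose edges pairwise do not cross. Class A: sets consisting of the following edges, for integers $\alpha,\delta\ge0$ with $\alpha+\delta\le m-2$: (1) all edges of the boundary path $\langle\alpha,\alpha+1,\dots,m-\delta\rangle$; (2) the edges $[i-1-\epsilon_i,\,i+\epsilon_i]$, $1\le i\le\alpha$, with $\epsilon_1>\dots>\epsilon_\alpha>0$ and $\alpha-i+1\le\epsilon_i\le m-\delta-i-1$; (3) the edges $[m-j-\xi_j,\,m-j+1+\xi_j]$, $1\le j\le\delta$, with $\xi_1>\dots>\xi_\delta>0$ and $\delta+1-j\le\xi_j\le m-j-\alpha-1$; and in addition $\epsilon_1+\xi_1\le m-2$ (when $\alpha,\delta>0$). *)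

(* Defs.v *)
(* Complete convex geometric graph CK(n), n = 2m-1, vertices
   labelled 0..n-1 clockwise; an edge is an unordered pair of labels,
   represented by an ordered pair (a,b) up to swapping. *)
From mathcomp Require Import all_boot all_order all_algebra.
Set Implicit Arguments. Unset Strict Implicit. Unset Printing Implicit Defensive.

Local Open Scope ring_scope.
Definition vmod (n : nat) (z : int) : nat := `|(z %% n%:Z)%Z|%N.

Definition same_edge (e f : nat * nat) : bool :=
  ((e.1 == f.1) && (e.2 == f.2)) || ((e.1 == f.2) && (e.2 == f.1)).

(* x lies strictly inside one of the two boundary arcs determined by a,b *)
Definition strictly_between (a b x : nat) : bool := (minn a b < x < maxn a b)%N.

(* two segments between points in convex position cross iff their four
   endpoints are distinct and interleave in the cyclic order *)
Definition cross (e f : nat * nat) : bool :=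
  let: (a, b) := e in let: (c, d) := f in
  [&& uniq [:: a; b; c; d] &
      strictly_between a b c != strictly_between a b d].

Definition path_edges (s : seq nat) : seq (nat * nat) := zip s (behead s).

Definition simple_ham_path (n : nat) (F : seq nat) : Prop :=
  perm_eq F (iota 0 n) /\
  (forall e f, e \in path_edges F -> f \in path_edges F -> ~~ cross e f).

Definition classA_params (m alpha delta : nat) (eps xi : nat -> nat) : Prop :=
  (alpha + delta <= m - 2)%N /\
  [/\ (forall i j, (1 <= i)%N -> (i < j)%N -> (j <= alpha)%N -> (eps j < eps i)%N),
      (forall i, (1 <= i <= alpha)%N ->
          [/\ (0 < eps i)%N, (alpha - i + 1 <= eps i)%N & (eps i <= m - delta - i - 1)%N]),
      (forall i j, (1 <= i)%N -> (i < j)%N -> (j <= delta)%N -> (xi j < xi i)%N),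
      (forall j, (1 <= j <= delta)%N ->
          [/\ (0 < xi j)%N, (delta + 1 - j <= xi j)%N & (xi j <= m - j - alpha - 1)%N]) &
      ((0 < alpha)%N -> (0 < delta)%N -> (eps 1 + xi 1 <= m - 2)%N)].

Definition classA_edges (m alpha delta : nat) (eps xi : nat -> nat) : seq (nat * nat) :=
  let n := (2 * m - 1)%N in
  [seq (k, k.+1) | k <- iota alpha (m - delta - alpha)] ++
  [seq (vmod n (i%:Z - 1 - (eps i)%:Z), vmod n (i%:Z + (eps i)%:Z)) | i <- iota 1 alpha] ++
  [seq (vmod n (m%:Z - j%:Z - (xi j)%:Z), vmod n (m%:Z - j%:Z + 1 + (xi j)%:Z))
     | j <- iota 1 delta].

(* Main.v *)
Require Import Defs.
From mathcomp Require Import all_boot all_order all_algebra zify.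
Set Implicit Arguments. Unset Strict Implicit.

Lemma pe_cons2 (u v : nat) s : path_edges [:: u, v & s] = (u, v) :: path_edges (v :: s).
Proof. by []. Qed.

Lemma pe_neighbor (F : seq nat) s : s \in F -> (1 < size F)%N ->
  exists t, ((s, t) \in path_edges F) || ((t, s) \in path_edges F).
Proof.
elim: F => [//|u F IH]; rewrite inE => /orP [/eqP ->|Hs] Hsz.
  case: F IH Hsz => [//|v F] _ _; exists v; rewrite pe_cons2; apply/orP; left; exact: mem_head.
case: F IH Hsz Hs => [//|v F] IH _ Hs.
case: F IH Hs => [|w F] IH Hs.
  move: Hs; rewrite inE => /eqP ->; exists u; rewrite pe_cons2; apply/orP; right; exact: mem_head.
have [t Ht] := IH Hs erefl.
exists t; apply/orP; case/orP: Ht => H; [left|right]; by rewrite pe_cons2 in_cons H orbT.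
Qed.

Lemma pe_uniq (F : seq nat) x y : uniq F -> (x, y) \in path_edges F -> x != y.
Proof.
elim: F => [//|u F IH] /= /andP [HuF HF].
case: F IH HuF HF => [//|v F] IH HuF HF.
rewrite pe_cons2 inE => /orP [/eqP [-> ->]|H]; last exact: IH.
by apply: contraNneq HuF => ->; rewrite inE eqxx.
Qed.

Lemma key (F : seq nat) lo hi : uniq F -> (1 < size F)%N ->
  (forall s, (lo <= s <= hi)%N -> s \in F) ->
  (forall e f, e \in path_edges F -> f \in path_edges F -> ~~ cross e f) ->
  forall x y, (x, y) \in path_edges F -> (lo <= x <= hi)%N -> (lo <= y <= hi)%N ->
  exists k, (lo <= k < hi)%N /\ (((k, k.+1) \in path_edges F) || ((k.+1, k) \in path_edges F)).
Proof.
move=> HU Hsz Hin Hnc.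
suff: forall N x y, (x - y + (y - x) <= N)%N -> (x, y) \in path_edges F -> (lo <= x <= hi)%N -> (lo <= y <= hi)%N ->
  exists k, (lo <= k < hi)%N /\ (((k, k.+1) \in path_edges F) || ((k.+1, k) \in path_edges F)).
  by move=> H x y; apply: (H _ x y (leqnn _)).
elim=> [|N IH] x y Hd He Hx Hy.
  have := pe_uniq HU He; lia.
have Hxy := pe_uniq HU He.
have [Hd1|Hd1] := boolP (x - y + (y - x) == 1)%N.
  have [Hlt|Hlt] := ltnP x y.
    exists x; split; first lia.
    have Ey : y = x.+1 by lia.
    by rewrite -Ey He.
  exists y; split; first lia.
  have Ex : x = y.+1 by lia.
  by rewrite -Ex He orbT.
set s := (minn x y).+1.
have Hs : s \in F by apply: Hin; lia.
have [t Ht] := pe_neighbor Hs Hsz.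
have Hst : s != t.
  by case/orP: Ht => /(pe_uniq HU) //; rewrite eq_sym.
have Htin : (minn x y <= t <= maxn x y)%N.
  apply/negPn/negP => Hout.
  have Hc : cross (x, y) (s, t) && cross (x, y) (t, s).
    rewrite /cross /= !inE /strictly_between.
    have -> : (minn x y < s < maxn x y)%N = true by apply/andP; split; lia.
    have -> : (minn x y < t < maxn x y)%N = false by apply/negbTE; apply/negP => /andP []; lia.
    apply/andP; split; (apply/andP; split; last by []);
    apply/and4P; split; try (apply/negP; rewrite ?negb_or; lia).
  case/andP: Hc => Hc1 Hc2.
  by case/orP: Ht => Hf; move: (Hnc _ _ He Hf); rewrite ?Hc1 ?Hc2.
case/orP: Ht => Hf.
  apply: (IH s t) => //; lia.
apply: (IH t s) => //; lia.
Qed.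

Theorem mainTheorem11 (m alpha delta : nat) (eps xi : nat -> nat) (F : seq nat) :
  (2 <= m)%N ->
  classA_params m alpha delta eps xi ->
  simple_ham_path (2 * m - 1) F ->
  (exists2 e, e \in path_edges F &
     [&& (alpha <= e.1 <= m - delta)%N & (alpha <= e.2 <= m - delta)%N]) ->
  exists e f, [/\ e \in path_edges F, f \in classA_edges m alpha delta eps xi
                & same_edge e f].
Proof.
move=> Hm [Hp _] [Hperm Hnc] [[x y] He /andP [Hx Hy]].
have HU : uniq F by rewrite (perm_uniq Hperm) iota_uniq.
have Hsz : (1 < size F)%N by rewrite (perm_size Hperm) size_iota; lia.
have Hin : forall s, (alpha <= s <= m - delta)%N -> s \in F.
  by move=> s Hs; rewrite (perm_mem Hperm) mem_iota; lia.
have [k [Hk Hke]] := key HU Hsz Hin Hnc He Hx Hy.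
have Hf : (k, k.+1) \in classA_edges m alpha delta eps xi.
  rewrite /classA_edges mem_cat; apply/orP; left.
  apply: (map_f (fun k => (k, k.+1))); rewrite mem_iota; lia.
case/orP: Hke => He'.
  exists (k, k.+1), (k, k.+1); split => //; by rewrite /same_edge !eqxx.
exists (k.+1, k), (k, k.+1); split => //; by rewrite /same_edge !eqxx orbT.
Qed.
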